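(* Let $S$ be an invariant star in $\mathbb{R}^N$ with internal vertex $0$, external vertices $\vec v_1,\dots,\vec v_n$ and invariant constant $\gamma$. Suppose the centre of mass $\frac1n\sum_\ell\vec v_\ell$ is non-zero, let $b>0$ be its distance from the origin and $\vec e=\sum_\ell\vec v_\ell/\|\sum_\ell\vec v_\ell\|$. For any real $x\ne-nb$, the star with internal vertex $0$ and the $n+1$ external vertices $\vec v_1,\dots,\vec v_n,x\vec e$ is invariant, with invariant constant $$\tilde\gamma=\frac{(n+1)(x^2+nb^2\gamma)}{(x+nb)^2}.$$
   Context: Let $P:\mathbb{R}^N\to\mathbb{C}$, $P(y_1,\dots,y_N)=y_1+iy_2$. A star in $\mathbb{R}^N$ with internal vertex $0$ and external vertices $\vec x_1,\dots,\vec x_m$ is invariant, with invariant constant $\gamma\in\mathbb{R}$, if for every orthogonal transformation $A$ of $\mathbb{R}^N$, setting $z_\ell=P(A\vec x_\ell)$, one has $\frac{\gamma}{m}\big(\sum_\ell z_\ell\big)^2=\sum_\ell z_\ell^2$. *)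

(* Defs.v *)
From HB Require Import structures.
From mathcomp Require Import all_boot all_order all_algebra.
Set Implicit Arguments. Unset Strict Implicit. Unset Printing Implicit Defensive.
Import Order.TTheory GRing.Theory Num.Theory.
Local Open Scope ring_scope.

(* k-th coordinate (0-based) of a column vector of R^N; 0 if out of range. *)
Definition coord (R : ringType) (N : nat) (v : 'cV[R]_N) (k : nat) : R :=
  match @insub nat (fun i => i < N)%N 'I_N k with Some i => v i 0 | None => 0 end.

(* Complex numbers represented as pairs (real part, imaginary part). *)
Definition cadd (R : ringType) (z w : R * R) : R * R := (z.1 + w.1, z.2 + w.2).
Definition cmul (R : ringType) (z w : R * R) : R * R :=
  (z.1 * w.1 - z.2 * w.2, z.1 * w.2 + z.2 * w.1).
Definition csq (R : ringType) (z : R * R) : R * R := cmul z z.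
Definition cscale (R : ringType) (a : R) (z : R * R) : R * R := (a * z.1, a * z.2).
Definition csum (R : ringType) (s : seq (R * R)) : R * R := foldr (@cadd R) (0, 0) s.

Definition Pproj (R : ringType) (N : nat) (y : 'cV[R]_N) : R * R :=
  (coord y 0, coord y 1).

Definition orthogonal (R : ringType) (N : nat) (A : 'M[R]_N) : Prop :=
  A^T *m A = 1%:M.

(* A star with internal vertex 0 and external vertices the list xs is invariant
   with invariant constant gamma. *)
Definition invariant_star (R : fieldType) (N : nat) (xs : seq 'cV[R]_N) (gamma : R)
  : Prop :=
  forall A : 'M[R]_N, orthogonal A ->
    let zs := [seq Pproj (A *m x) | x <- xs] in
    cscale (gamma / (size xs)%:R) (csq (csum zs)) = csum [seq csq z | z <- zs].

Definition vnorm (R : rcfType) (N : nat) (v : 'cV[R]_N) : R :=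
  Num.sqrt (\sum_(i < N) v i 0 ^+ 2).

(* Main.v *)
Require Import Defs.
From HB Require Import structures.
From mathcomp Require Import all_boot all_order all_algebra.
From mathcomp Require Import ring.
Import Order.TTheory GRing.Theory Num.Theory.
Local Open Scope ring_scope.

Lemma coordD (R : rcfType) N (u v : 'cV[R]_N) k :
  Defs.coord (u + v) k = Defs.coord u k + Defs.coord v k.
Proof. rewrite /Defs.coord; case: insub => [i|] /=; by rewrite ?mxE ?addr0. Qed.

Lemma coordZ (R : rcfType) N (c : R) (v : 'cV[R]_N) k :
  Defs.coord (c *: v) k = c * Defs.coord v k.
Proof. rewrite /Defs.coord; case: insub => [i|] /=; by rewrite ?mxE ?mulr0. Qed.

Lemma coord0 (R : rcfType) N k : Defs.coord (0 : 'cV[R]_N) k = 0.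
Proof. rewrite /Defs.coord; case: insub => [i|] /=; by rewrite ?mxE. Qed.

Lemma csum_map (R : rcfType) N (A : 'M[R]_N) (vs : seq 'cV[R]_N) :
  csum [seq Pproj (A *m x) | x <- vs] = Pproj (A *m \sum_(v <- vs) v).
Proof.
elim: vs => [|v vs IH] /=.
  by rewrite big_nil mulmx0 /Pproj !coord0.
rewrite big_cons mulmxDr IH /cadd /Pproj !coordD //.
Qed.


Lemma csum_rcons (R : rcfType) (s : seq (R * R)) a :
  csum (rcons s a) = cadd (csum s) a.
Proof.
elim: s => [|b s IH] /=.
  by rewrite /cadd /= !add0r !addr0; case: a.
by rewrite IH /cadd /= !addrA.
Qed.


Theorem lemmaA1 (R : rcfType) (N : nat) (hN : (2 <= N)%N)
  (vs : seq 'cV[R]_N) (gamma : R)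
  (hinv : invariant_star vs gamma)
  (hsum : \sum_(v <- vs) v != 0)
  (x : R)
  (hx : x != - ((size vs)%:R * (vnorm (\sum_(v <- vs) v) / (size vs)%:R))) :
  let n := size vs in
  let b := vnorm (\sum_(v <- vs) v) / n%:R in
  let e := (vnorm (\sum_(v <- vs) v))^-1 *: \sum_(v <- vs) v in
  invariant_star (rcons vs (x *: e))
    ((n.+1)%:R * (x ^+ 2 + n%:R * b ^+ 2 * gamma) / (x + n%:R * b) ^+ 2).
Proof.
move=> n b e.
set s := \sum_(v <- vs) v in hsum hx b e *.
set m := vnorm s in hx b e *.
have hn : n%:R != 0 :> R.
  rewrite pnatr_eq0 /n size_eq0; apply/negP => /eqP E.
  by move: hsum; rewrite /s E big_nil eqxx.
have hm : m != 0.
  apply/negP => /eqP m0; move/negP: hsum; apply; apply/eqP/matrixP => i j.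
  rewrite ord1 mxE.
  move: m0; rewrite /m /vnorm => /eqP; rewrite sqrtr_eq0 => hle.
  have hs : \sum_(i < N) s i 0 ^+ 2 = 0.
    apply/eqP; rewrite eq_le hle sumr_ge0 // => k _; exact: sqr_ge0.
  have := psumr_eq0P (fun k _ => sqr_ge0 (s k 0)) hs (i := i) isT.
  by move/eqP; rewrite sqrf_eq0 => /eqP.
have nbm : n%:R * b = m by rewrite /b mulrC -mulrA mulVf // mulr1.
have e1 : n%:R * (m / n%:R) = m by rewrite mulrC -mulrA mulVf // mulr1.
rewrite -/n e1 in hx.
rewrite /b e1.
have hxm : x + m != 0 by rewrite addr_eq0.
move=> A hA /=.
have := hinv A hA => /=.
rewrite !map_rcons !csum_rcons !csum_map.
have -> : Pproj (A *m (x *: e)) = cscale (x / m) (Pproj (A *m s)).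
  by rewrite /e scalerA -scalemxAr /Pproj !coordZ /cscale mulrC.
rewrite size_rcons -/n /b.
set q := csum [seq csq z | z <- _].
case: (Pproj (A *m s)) => w1 w2.
case: q => q1 q2.
rewrite /cscale /csq /cmul /cadd /= => [[h1 h2]].
rewrite -h1 -h2.
have hn1 : (n.+1)%:R != 0 :> R by rewrite pnatr_eq0.
congr (_, _); field; rewrite ?hn ?hm ?hxm ?hn1 //.
all: by rewrite -natr1 addrC in hn1; rewrite hn1.
Qed.
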